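(* Let $X$ be a continuous vector field on $\mathbb{S}^1$ of finite width $w(X)$, with support function $\phi_X$. Assume that $\mathbb{D}^2\times\{0\}$ is a support plane of $\mathrm{gr}(\phi_X^-)$ at $(0,0,\phi_X^-(0,0))$, i.e. $\phi_X^-(\eta)\ge0$ for all $\eta\in\mathbb{D}^2$ and $\phi_X^-(0,0)=0$. Then $\phi_X(z)\le2w(X)$ for all $z\in\mathbb{S}^1$.
   Context: $\mathbb{D}^2$ is the open unit disk in $\mathbb{R}^2$, $\mathbb{S}^1$ its boundary. A vector field $X$ on $\mathbb{S}^1$ is written $X(z)=iz\phi_X(z)$ with $\phi_X:\mathbb{S}^1\to\mathbb{R}$ its support function. For $\eta\in\overline{\mathbb{D}^2}$, $\phi_X^-(\eta)=\sup\{a(\eta):a:\mathbb{R}^2\to\mathbb{R}\text{ affine},a|_{\mathbb{S}^1}\le\phi_X\}$, $\phi_X^+(\eta)=\inf\{a(\eta):a\text{ affine},a|_{\mathbb{S}^1}\ge\phi_X\}$. The width is $w(X)=\sup_{\eta\in\mathbb{D}^2}\frac{\phi_X^+(\eta)-\phi_X^-(\eta)}{\sqrt{1-|\eta|^2}}$. *)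

(* Defs.v *)
From HB Require Import structures.
From mathcomp Require Import all_boot all_order all_algebra.
From mathcomp Require Import all_classical all_reals all_analysis.
Set Implicit Arguments. Unset Strict Implicit. Unset Printing Implicit Defensive.
Import Order.TTheory GRing.Theory Num.Theory numFieldNormedType.Exports.
Local Open Scope classical_set_scope.
Local Open Scope ring_scope.

Definition S1 (R : realType) : set (R * R) := [set p | p.1 ^+ 2 + p.2 ^+ 2 = 1].
Arguments S1 R : clear implicits.
Definition D2 (R : realType) : set (R * R) := [set p | p.1 ^+ 2 + p.2 ^+ 2 < 1].

Arguments D2 R : clear implicits.

Definition affine_eval (R : realType) (c : R * R * R) (p : R * R) : R :=
  c.1.1 + c.1.2 * p.1 + c.2 * p.2.

Definition phi_minus (R : realType) (phi : R * R -> R) (eta : R * R) : R :=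
  sup [set affine_eval c eta | c in
        [set c : R * R * R | forall z : R * R, S1 R z -> affine_eval c z <= phi z]].

Definition phi_plus (R : realType) (phi : R * R -> R) (eta : R * R) : R :=
  inf [set affine_eval c eta | c in
        [set c : R * R * R | forall z : R * R, S1 R z -> phi z <= affine_eval c z]].

Definition width (R : realType) (phi : R * R -> R) : \bar R :=
  ereal_sup [set ((phi_plus phi eta - phi_minus phi eta)
                   / Num.sqrt (1 - (eta.1 ^+ 2 + eta.2 ^+ 2)))%:E
            | eta in D2 R].

(* Main.v *)
From HB Require Import structures.
From mathcomp Require Import all_boot all_order all_algebra.
From mathcomp Require Import all_classical all_reals all_analysis.
From mathcomp Require Import ring lra.
Import Order.TTheory GRing.Theory Num.Theory numFieldNormedType.Exports.
Local Open Scope classical_set_scope. Local Open Scope ring_scope.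
Require Import Defs.
Lemma S1_compact (R : realType) : compact (S1 R).
Proof.
have -> : S1 R = (`[-1, 1] `*` `[-1, 1]) `&` S1 R.
  apply/seteqP; split => p //; last by case.
  move=> Hp; split => //; rewrite /S1 /= in Hp; split => /=; rewrite in_itv /=;
  apply/andP; split; nra.
apply: compact_closedI; first by apply: compact_setX; exact: segment_compact.
have -> : S1 R = (fun p : R * R => p.1 ^+ 2 + p.2 ^+ 2) @^-1` [set 1] by [].
apply: (proj1 (continuous_closedP _)); last exact: closed_eq.
move=> p; apply: cvgD; apply: cvgM; [exact: cvg_fst|exact: cvg_fst|exact: cvg_snd|exact: cvg_snd].
Qed.

Lemma phi_bounded (R : realType) (phi : R * R -> R) :
  {within S1 R, continuous phi} -> exists K, forall z, S1 R z -> `|phi z| <= K.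
Proof.
move=> hc.
have /compact_bounded [M [_ HM]] := continuous_compact hc (S1_compact R).
exists (M + 1) => z Sz; apply: (HM (M+1)); first lra.
by exists z.
Qed.
Lemma affine_disk (R : realType) (c : R * R * R) (e : R * R) :
  (forall z, S1 R z -> affine_eval c z <= 0) ->
  e.1 ^+ 2 + e.2 ^+ 2 <= 1 -> affine_eval c e <= 0.
Proof.
case: c => [[d0 d1] d2]; case: e => x y /= H He; rewrite /affine_eval /=.
set s := d1 ^+ 2 + d2 ^+ 2.
have s0 : 0 <= s by rewrite /s; nra.
set r := Num.sqrt s.
have r0 : 0 <= r by exact: sqrtr_ge0.
have rr : r ^+ 2 = s by rewrite sqr_sqrtr.
have [rz | rp] := eqVneq r 0.
  have : s = 0 by rewrite -rr rz expr0n.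
  rewrite /s => hs.
  have h1 : d1 = 0 by nra.
  have h2 : d2 = 0 by nra.
  have := H (1, 0); rewrite /S1 /affine_eval /= h1 h2.
  move=> /(_ ltac:(by rewrite expr1n expr0n addr0)); lra.
have rpos : 0 < r by rewrite lt_def rp r0.
have := H (d1 / r, d2 / r).
rewrite /S1 /affine_eval /=.
have hS : (d1 / r) ^+ 2 + (d2 / r) ^+ 2 = 1.
  by rewrite !expr_div_n -mulrDl -/s -rr divff // expf_neq0.
move=> /(_ hS).
have E : d1 * (d1 / r) + d2 * (d2 / r) = r.
  by rewrite !mulrA -mulrDl -!expr2 -/s -rr expr2 mulfK.
move=> hr.
have cs : (d1 * x + d2 * y) ^+ 2 <= r ^+ 2.
  have h1 := sqr_ge0 (d1 * y - d2 * x).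
  have h2 : 0 <= s * (1 - (x ^+ 2 + y ^+ 2)) by apply: mulr_ge0 => //; lra.
  rewrite rr; move: h2; rewrite /s; nra.
have : d1 * x + d2 * y <= r.
  case: (lerP (d1 * x + d2 * y) 0) => h; first lra.
  by rewrite -(ler_pXn2r (n:=2)) // ?nnegrE ?ltW.
lra.
Qed.

Theorem lemma6p4 (R : realType) (phi : R * R -> R) :
  {within S1 R, continuous phi} ->
  (width phi < +oo)%E ->
  (forall eta, D2 R eta -> 0 <= phi_minus phi eta) ->
  phi_minus phi (0, 0) = 0 ->
  forall z, S1 R z -> ((phi z)%:E <= 2%:E * width phi)%E.
Proof.
move=> hc _ hpos h0 z Sz.
have [K HK] := @phi_bounded _ _ hc.
have clA : forall b : R * R * R, (forall z, S1 R z -> phi z <= affine_eval b z) ->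
    forall e, D2 R e -> phi_minus phi e <= affine_eval b e.
  move=> b Hb e De; rewrite /phi_minus; apply: ge_sup.
    exists (affine_eval (- K, 0, 0) e), (- K, 0, 0) => // w Sw.
    have := HK w Sw; rewrite /affine_eval /= => /ler_normlP [h1 h2]; lra.
  move=> _ [a Ha <-].
  have := @affine_disk R (a.1.1 - b.1.1, a.1.2 - b.1.2, a.2 - b.2) e.
  rewrite /affine_eval /= => H.
  have : a.1.1 - b.1.1 + (a.1.2 - b.1.2) * e.1 + (a.2 - b.2) * e.2 <= 0.
    apply: H; last by move: De; rewrite /D2 /=; lra.
    move=> w Sw; have := Ha w Sw; have := Hb w Sw; rewrite /affine_eval; lra.
  lra.
have clB : (phi z) / 2 <= phi_plus phi (0, 0).
  rewrite /phi_plus; apply: lb_le_inf.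
    exists (affine_eval (K, 0, 0) (0, 0)), (K, 0, 0) => // w Sw.
    have := HK w Sw; rewrite /affine_eval /= => /ler_normlP [h1 h2]; lra.
  move=> _ [b Hb <-].
  have hz := Hb z Sz.
  have ht : forall t, 0 <= t < 1 -> 0 <= affine_eval b (- t * z.1, - t * z.2).
    move=> t /andP [t0 t1].
    have De : D2 R (- t * z.1, - t * z.2).
      move: Sz; rewrite /D2 /S1 /= => Sz'.
      have -> : (- t * z.1) ^+ 2 + (- t * z.2) ^+ 2 = t ^+ 2 * (z.1 ^+ 2 + z.2 ^+ 2) by ring.
      rewrite Sz' mulr1.
      nra.
    exact: le_trans (hpos _ De) (clA b Hb _ De).
  move: hz ht; rewrite /affine_eval /=.
  case: b {Hb} => [[c0 c1] c2] /=.
  set u := c1 * z.1 + c2 * z.2.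
  have eq1 : forall t, c0 + c1 * (- t * z.1) + c2 * (- t * z.2) = c0 - t * u.
    by move=> t; rewrite /u; ring.
  move=> hz ht.
  have c00 : 0 <= c0.
    by have := ht 0; rewrite eq1 mul0r subr0; apply; rewrite lexx ltr01.
  have cu : u <= c0.
    case: (lerP u c0) => // hu.
    have u0 : 0 < u by lra.
    pose t := (c0 + u) / (2 * u).
    have tu : t * u = (c0 + u) / 2.
      by rewrite /t; field; rewrite gt_eqF.
    have : 0 <= c0 - t * u.
      rewrite -eq1; apply: ht; apply/andP; split.
        by rewrite /t; apply: divr_ge0; lra.
      by rewrite /t ltr_pdivrMr ?mul1r; lra.
    rewrite tu; lra.
  have : c0 + c1 * z.1 + c2 * z.2 = c0 + u by rewrite /u addrA.
  lra.
have hw : (((phi z) / 2)%:E <= width phi)%E.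
  apply: le_trans (ereal_sup_ubound _); last first.
    exists (0, 0); first by rewrite /D2 /= expr0n addr0 ltr01.
    reflexivity.
  rewrite h0 subr0 expr0n addr0 subr0 sqrtr1 divr1 lee_fin; exact: clB.
apply: le_trans (lee_wpmul2l _ hw); last by rewrite lee_fin.
by rewrite -EFinM lee_fin; lra.
Qed.
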